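(* Let $\theta\in(0,1)$, $T>0$, and let $b\in L^\infty([0,\infty),C_b^\theta(\mathbb{R}^d,\mathbb{R}^d))$, $\sigma\in L^\infty([0,\infty),C_b^{1+\theta}(\mathbb{R}^d,\mathbb{R}^d\otimes\mathbb{R}^d))$ be such that $a=\sigma\sigma^*$ is everywhere invertible with $\|a^{-1}\|_0:=\sup_{t,x}\|a^{-1}(t,x)\|_{HS}<\infty$. Let $\lambda>0$ be such that the unique solution $\psi=\psi_\lambda\in L^\infty([0,\infty),C_b^{2+\theta}(\mathbb{R}^d,\mathbb{R}^d))$ of $$\partial_t\psi+\tfrac12\mathrm{Tr}[a(t,x)\nabla^2\psi]+\langle b(t,x),\nabla\psi\rangle-\lambda\psi=b\quad\text{on }[0,\infty)\times\mathbb{R}^d$$ satisfies $\sup_{t,x}\|\nabla\psi(t,x)\|_{HS}\le\frac12$, and suppose that for each $t$ the map $\Psi_t(x)=x+\psi(t,x)$ is a $C^2$-diffeomorphism of $\mathbb{R}^d$ with inverse $\Psi_t^{-1}$, where $\nabla\Psi_t$, $\nabla^2\Psi_t$ and $\nabla\Psi_t^{-1}$ are bounded uniformly in $t$ and $\nabla\Psi_t^{-1}(x)=\sum_{k\ge0}[-\nabla\psi(t,\Psi_t^{-1}(x))]^k$. Define $$\hat\sigma(t,x)=\nabla\Psi_t(\Psi_t^{-1}(x))\,\sigma(t,\Psi_t^{-1}(x)),\qquad \hat b(t,x)=\lambda\,\psi(t,\Psi_t^{-1}(x)).$$ Then there exist positive constants $K_1,\kappa_1,\delta_1$ such that for all $0\le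 t\le T$ and $x,y\in\mathbb{R}^d$: (1) $\|\hat\sigma(t,x)-\hat\sigma(t,y)\|_{HS}^2+2\langle\hat b(t,x)-\hat b(t,y),x-y\rangle\le K_1|x-y|^2$; (2) $\hat\sigma(t,x)\hat\sigma(t,x)^*\ge\kappa_1^2\,\mathrm{Id}$; (3) $|(\hat\sigma(t,x)-\hat\sigma(t,y))(x-y)|\le\delta_1|x-y|$.
   Context: $L^\infty([0,\infty),C_b^{n+\theta})$ consists of bounded Borel functions on $[0,\infty)\times\mathbb{R}^d$ whose spatial derivatives up to order $n$ are bounded and whose $n$-th spatial derivatives are $\theta$-Hölder continuous in $x$ uniformly in $t$ (norms taken as Euclidean or Hilbert–Schmidt for vector/matrix-valued functions). $\|\cdot\|_{HS}$ is the Hilbert–Schmidt norm, and $A\ge c\,\mathrm{Id}$ means $\langle Az,z\rangle\ge c|z|^2$ for all $z$. *)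

(* Defs.v *)
From HB Require Import structures.
From mathcomp Require Import all_boot all_order all_algebra.
From mathcomp Require Import all_classical all_reals all_analysis.
Set Implicit Arguments. Unset Strict Implicit. Unset Printing Implicit Defensive.
Import Order.TTheory GRing.Theory Num.Theory.
Import numFieldNormedType.Exports.
Local Open Scope classical_set_scope.
Local Open Scope ring_scope.

Section Defs.
Variables (R : realType) (d : nat).

Definition evec (j : 'I_d) : 'cV[R]_d := delta_mx j 0.

Definition dotv (u v : 'cV[R]_d) : R := \sum_(i < d) u i 0 * v i 0.
Definition enorm (v : 'cV[R]_d) : R := Num.sqrt (dotv v v).
Definition hsnorm (A : 'M[R]_d) : R :=
  Num.sqrt (\sum_(i < d) \sum_(j < d) A i j ^+ 2).

Definition pderiv (f : 'cV[R]_d -> R) (j : 'I_d) : 'cV[R]_d -> R :=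
  fun x => derive1 (fun h : R => f (x + h *: evec j)) 0.
Definition has_pderiv (f : 'cV[R]_d -> R) (j : 'I_d) : Prop :=
  forall x, derivable (fun h : R => f (x + h *: evec j)) 0 1.

Fixpoint pdern (f : 'cV[R]_d -> R) (s : seq 'I_d) : 'cV[R]_d -> R :=
  match s with
  | [::] => f
  | j :: s' => pderiv (pdern f s') j
  end.

(* g : [0,oo) x R^d -> R belongs to L^oo([0,oo), C_b^{n+theta}(R^d)):
   Borel in t (for each x), all spatial partial derivatives up to order n
   exist, are bounded uniformly in (t,x), and the n-th ones are
   theta-Hoelder in x uniformly in t. *)
Definition LinfCb (n : nat) (theta : R) (g : R -> 'cV[R]_d -> R) : Prop :=
  (forall x, measurable_fun [set t : R | 0 <= t] (fun t => g t x)) /\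
  (forall t, 0 <= t -> forall s : seq 'I_d, (size s < n)%N ->
      forall j, has_pderiv (pdern (g t) s) j) /\
  (exists C : R, forall t, 0 <= t -> forall s : seq 'I_d, (size s <= n)%N ->
      forall x, `|pdern (g t) s x| <= C) /\
  (exists C : R, forall t, 0 <= t -> forall s : seq 'I_d, size s = n ->
      forall x y, `|pdern (g t) s x - pdern (g t) s y| <= C * enorm (x - y) `^ theta).

Definition LinfCb_vec (n : nat) (theta : R) (g : R -> 'cV[R]_d -> 'cV[R]_d) :=
  forall i : 'I_d, LinfCb n theta (fun t x => g t x i 0).

Definition LinfCb_mx (n : nat) (theta : R) (g : R -> 'cV[R]_d -> 'M[R]_d) :=
  forall i j : 'I_d, LinfCb n theta (fun t x => g t x i j).

Definition C2 (f : 'cV[R]_d -> R) : Prop :=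
  forall s : seq 'I_d, (size s <= 2)%N ->
    (continuous (pdern f s)) /\ ((size s < 2)%N -> forall j, has_pderiv (pdern f s) j).

Definition C2_vec (f : 'cV[R]_d -> 'cV[R]_d) : Prop :=
  forall i : 'I_d, C2 (fun x => f x i 0).

Definition jac (f : 'cV[R]_d -> 'cV[R]_d) (x : 'cV[R]_d) : 'M[R]_d :=
  \matrix_(i, j) pderiv (fun y => f y i 0) j x.

Definition hess_comp (f : 'cV[R]_d -> 'cV[R]_d) (i : 'I_d) (x : 'cV[R]_d) : 'M[R]_d :=
  \matrix_(k, l) pdern (fun y => f y i 0) [:: k; l] x.

(* the i-th component of the left-hand side operator of the PDE without d_t:
   (1/2) Tr[a Hess psi_i] + <b, grad psi_i> - lambda psi_i *)
Definition ell_op (a : 'M[R]_d) (bv : 'cV[R]_d) (lam : R)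
  (f : 'cV[R]_d -> 'cV[R]_d) (i : 'I_d) (x : 'cV[R]_d) : R :=
  2^-1 * \tr (a *m hess_comp f i x)
  + \sum_(k < d) bv k 0 * pderiv (fun y => f y i 0) k x
  - lam * f x i 0.

End Defs.

(* Main.v *)
Require Import Defs.
From HB Require Import structures.
From mathcomp Require Import all_boot all_order all_algebra.
From mathcomp Require Import all_classical all_reals all_analysis.
From mathcomp Require Import ring lra.
Import Order.TTheory GRing.Theory Num.Theory.
Import numFieldNormedType.Exports.
Local Open Scope classical_set_scope.
Local Open Scope ring_scope.

Section Aux.
Context {R : realType}.

Lemma lip1 (f : R -> R) C : (forall s, derivable f s 1) ->
  (forall s, `|derive1 f s| <= C) -> forall a b, `|f b - f a| <= C * `|b - a|.
Proof.
move=> df dC a b.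
wlog ab : a b / a <= b.
  move=> H; case: (leP a b) => [|/ltW] h; first exact: H.
  by rewrite distrC (distrC b); exact: H.
have cont : {within `[a, b], continuous f}%classic.
  by apply: derivable_within_continuous => x _; exact: df.
have hd' : forall x, x \in `]a, b[ -> is_derive x 1 f (derive1 f x).
  by move=> x _; rewrite derive1E; apply: derivableP; exact: df.
have [c _ ->] := MVT_segment ab hd' cont.
by rewrite normrM (ger0_norm (x := b - a)) ?subr_ge0 // ler_wpM2r ?subr_ge0.
Qed.

Context {d : nat}.
Lemma phi_der (g : 'cV[R]_d -> R) (z : 'cV[R]_d) (j : 'I_d) : has_pderiv g j -> forall s : R,
  derivable (fun h : R => g (z + h *: evec R j)) s 1 /\
  derive1 (fun h : R => g (z + h *: evec R j)) s = pderiv g j (z + s *: evec R j).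
Proof.
move=> hd s.
have E : forall h : R, g (z + (h + s) *: evec R j) = g ((z + s *: evec R j) + h *: evec R j).
  by move=> h; rewrite scalerDl addrA (addrAC z).
split.
  move: (hd (z + s *: evec R j)); rewrite /derivable.
  match goal with |- cvg (?F @ _) -> cvg (?G @ _) =>
    have -> : G = F; [apply: funext => h /= | by []] end.
  by rewrite /shift /= scale0r !addr0 E.
rewrite /pderiv /derive1.
match goal with |- lim (?F @ _) = lim (?G @ _) =>
    have -> : F = G; [apply: funext => h /= | by []] end.
by rewrite scale0r !addr0 E.
Qed.

Definition n1 (v : 'cV[R]_d) : R := \sum_j `|v j 0|.

Lemma lipd (g : 'cV[R]_d -> R) C : (forall j, has_pderiv g j) ->
  (forall j x, `|pderiv g j x| <= C) -> forall x y, `|g x - g y| <= C * n1 (x - y).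
Proof.
move=> hd hC x y.
pose w (k : nat) : 'cV[R]_d := \col_i (if (i < k)%N then y i 0 else x i 0).
pose F (j : 'I_d) := `|x j 0 - y j 0|.
have step : forall k (Hk : (k < d)%N),
    w k.+1 = w k + (y (Ordinal Hk) 0 - x (Ordinal Hk) 0) *: evec R (Ordinal Hk).
  move=> k Hk; apply/matrixP => i c; rewrite (ord1 c) !mxE /=.
  have [->|ne] := eqVneq i (Ordinal Hk).
    by rewrite /= ltnn leqnn mulr1 addrC subrK.
  have ne' : (nat_of_ord i != k) by apply: contra ne => /eqP e; apply/eqP/val_inj.
  by rewrite ltnS leq_eqVlt (negbTE ne') /= mulr0 addr0.
have main : forall k, (k <= d)%N ->
    `|g (w k) - g x| <= C * \sum_(j < d) (if (j < k)%N then F j else 0).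
  elim => [|k IH] Hk.
    have -> : w 0%N = x by apply/matrixP => i c; rewrite !mxE ltn0 (ord1 c).
    by rewrite subrr normr0 big1 ?mulr0.
  have Hk' : (k < d)%N by [].
  have IH' := IH (ltnW Hk).
  set j0 := Ordinal Hk'.
  have split : \sum_(j < d) (if (j < k.+1)%N then F j else 0) =
       \sum_(j < d) (if (j < k)%N then F j else 0) + F j0.
    have -> : F j0 = \sum_(j < d) (if j == j0 then F j else 0).
      by rewrite -big_mkcond big_pred1_eq.
    rewrite -big_split /=; apply: eq_bigr => i _.
    have [->|ne] := eqVneq i j0; first by rewrite /= ltnn leqnn add0r.
    have ne' : (nat_of_ord i != k) by apply: contra ne => /eqP e; apply/eqP/val_inj.
    by rewrite ltnS leq_eqVlt (negbTE ne') /= addr0.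
  rewrite split mulrDr.
  have -> : g (w k.+1) - g x = (g (w k.+1) - g (w k)) + (g (w k) - g x) by rewrite subrKA.
  apply: le_trans (ler_normD _ _) _; rewrite addrC lerD //.
  rewrite (step k Hk') -/j0.
  pose f := fun h : R => g (w k + h *: evec R j0).
  have := @lip1 f C (fun s => (phi_der g (w k) j0 (hd j0) s).1) _ 0 (y j0 0 - x j0 0).
  rewrite /f scale0r addr0 subr0 /F (distrC (x j0 0)); apply.
  by move=> s; rewrite (phi_der g (w k) j0 (hd j0) s).2.
have := main d (leqnn d).
have -> : w d = y by apply/matrixP => i c; rewrite !mxE ltn_ord (ord1 c).
rewrite /n1 distrC.
suff -> : \sum_(j < d) (if (j < d)%N then F j else 0) = \sum_j `|(x - y) j 0| by [].
by apply: eq_bigr => i _; rewrite ltn_ord /F !mxE.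
Qed.

Lemma jacPs (f : 'cV[R]_d -> 'cV[R]_d) z :
  (forall i j, has_pderiv (fun y => f y i 0) j) ->
  jac (fun y => y + f y) z = 1%:M + jac f z.
Proof.
move=> hd; apply/matrixP => i j; rewrite !mxE /pderiv.
pose c : R := evec R j i 0.
have Ef : (fun h : R => (z + h *: evec R j + f (z + h *: evec R j)) i 0) =
   (cst (z i 0) + c *: (@id R)) + (fun h => f (z + h *: evec R j) i 0).
  by apply: funext => h; rewrite !fctE /c !mxE /= mulrC.
have d1 : is_derive (0:R) 1 (cst (z i 0) + c *: (@id R)) (0 + c *: 1).
  by apply: is_deriveD.
have d2 : derivable (fun h : R => f (z + h *: evec R j) i 0) 0 1.
  exact: hd i j z.
rewrite Ef derive1E deriveD // derive_val derive1E add0r /c /evec mxE eqxx andbT.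
by rewrite [_ *: 1]mulr1.
Qed.
Lemma CSsum {I : finType} (a b : I -> R) :
  (\sum_i a i * b i) ^+ 2 <= (\sum_i a i ^+ 2) * (\sum_i b i ^+ 2).
Proof.
set P := \sum_i a i ^+ 2; set S := \sum_i a i * b i; set Q := \sum_i b i ^+ 2.
have key : forall t, 0 <= t ^+ 2 * P + 2 * t * S + Q.
  move=> t; have -> : t ^+ 2 * P + 2 * t * S + Q = \sum_i (a i * t + b i) ^+ 2.
    rewrite /P /S /Q !mulr_sumr -!big_split /=; apply: eq_bigr => i _; ring.
  by apply: sumr_ge0 => i _; rewrite sqr_ge0.
have P0 : 0 <= P by apply: sumr_ge0 => i _; rewrite sqr_ge0.
have Q0 : 0 <= Q by apply: sumr_ge0 => i _; rewrite sqr_ge0.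
have [Pe|Pn0] := eqVneq P 0.
  have a0 : forall i, a i = 0.
    move=> i; apply/eqP; rewrite -sqrf_eq0; apply/eqP.
    by apply: (psumr_eq0P (P:=xpredT) (fun i _ => sqr_ge0 (a i))).
  rewrite Pe.
  have -> : S = 0 by rewrite /S big1 // => i _; rewrite a0 mul0r.
  by rewrite expr0n /= mul0r.
have Pp : 0 < P by rewrite lt_def Pn0 P0.
have SE : S = (S / P) * P by rewrite divfK.
have := key (- (S / P)); move: SE; set u := S / P => SE k.
rewrite SE.
have k' : 0 <= Q - u ^+ 2 * P.
  move: k; rewrite SE.
  have -> : (- u) ^+ 2 * P + 2 * - u * (u * P) + Q = Q - u ^+ 2 * P by ring.
  done.
have : 0 <= P * (Q - u ^+ 2 * P) by apply: mulr_ge0.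
move=> h; rewrite -subr_ge0.
by have -> : P * Q - (u * P) ^+ 2 = P * (Q - u ^+ 2 * P) by ring.
Qed.


Lemma sq_le {a b : R} : `|a| <= b -> a ^+ 2 <= b ^+ 2.
Proof. rewrite ler_norml => /andP[h1 h2]; nra. Qed.

Lemma dotv_ge0 (v : 'cV[R]_d) : 0 <= dotv v v.
Proof. by apply: sumr_ge0 => i _; rewrite -expr2 sqr_ge0. Qed.

Lemma enorm_sq (v : 'cV[R]_d) : enorm v ^+ 2 = dotv v v.
Proof. by rewrite /enorm sqr_sqrtr // dotv_ge0. Qed.

Lemma enorm_ge0 (v : 'cV[R]_d) : 0 <= enorm v.
Proof. exact: sqrtr_ge0. Qed.

Lemma hs_sq (A : 'M[R]_d) : hsnorm A ^+ 2 = \sum_i \sum_j A i j ^+ 2.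
Proof.
rewrite /hsnorm sqr_sqrtr //; apply: sumr_ge0 => i _; apply: sumr_ge0 => j _.
exact: sqr_ge0.
Qed.

Lemma hs_ge0 (A : 'M[R]_d) : 0 <= hsnorm A.
Proof. exact: sqrtr_ge0. Qed.

Lemma term_le_sum {I : finType} (F : I -> R) i0 :
  (forall i, 0 <= F i) -> F i0 <= \sum_i F i.
Proof.
move=> h; rewrite (bigD1 i0) //= lerDl; apply: sumr_ge0 => i _; exact: h.
Qed.

Lemma coord_le_enorm (v : 'cV[R]_d) i : `|v i 0| <= enorm v.
Proof.
rewrite /enorm -(sqrtr_sqr (v i 0)) ler_sqrt ?dotv_ge0 //.
rewrite /dotv expr2.
apply: (term_le_sum (fun i => v i 0 * v i 0) i) => k.
by rewrite -expr2 sqr_ge0.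
Qed.

Lemma entry_le_hs (A : 'M[R]_d) i j : `|A i j| <= hsnorm A.
Proof.
rewrite /hsnorm -(sqrtr_sqr (A i j)) ler_sqrt; last first.
  by apply: sumr_ge0 => k _; apply: sumr_ge0 => l _; exact: sqr_ge0.
apply: (le_trans _ (term_le_sum (fun i => \sum_j A i j ^+ 2) i _)).
  exact: (term_le_sum (fun j => A i j ^+ 2) j (fun l => sqr_ge0 _)).
by move=> k; apply: sumr_ge0 => l _; exact: sqr_ge0.
Qed.

Lemma sum_le_const (F : 'I_d -> R) K : (forall i, F i <= K) ->
  \sum_i F i <= d%:R * K.
Proof.
move=> h; apply: le_trans (ler_sum _ (fun i _ => h i)) _.
by rewrite sumr_const card_ord mulr_natl.
Qed.

Lemma n1_le (v : 'cV[R]_d) : n1 v <= d%:R * enorm v.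
Proof. by apply: sum_le_const => i; exact: coord_le_enorm. Qed.

Lemma n1_ge0 (v : 'cV[R]_d) : 0 <= n1 v.
Proof. by apply: sumr_ge0 => i _. Qed.

Lemma mxCS (M : 'M[R]_d) (u : 'cV[R]_d) :
  dotv (M *m u) (M *m u) <= hsnorm M ^+ 2 * dotv u u.
Proof.
rewrite hs_sq /dotv mulr_suml; apply: ler_sum => i _.
rewrite !mxE -expr2.
have := CSsum (fun j => M i j) (fun j => u j 0).
by under [X in _ <= _ * X -> _]eq_bigr => j _ do rewrite expr2.
Qed.

Lemma hs_tr (A : 'M[R]_d) : hsnorm A^T = hsnorm A.
Proof.
rewrite /hsnorm exchange_big /=; congr Num.sqrt; apply: eq_bigr => i _.
by apply: eq_bigr => j _; rewrite mxE.
Qed.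

Lemma dotv_mx (M : 'M[R]_d) (z : 'cV[R]_d) :
  dotv ((M *m M^T) *m z) z = dotv (M^T *m z) (M^T *m z).
Proof.
have E : forall u v : 'cV[R]_d, dotv u v = (u^T *m v) 0 0.
  by move=> u v; rewrite /dotv mxE; apply: eq_bigr => i _; rewrite mxE.
by rewrite !E !trmx_mul trmxK !mulmxA.
Qed.

Lemma enorm_entries (v : 'cV[R]_d) K : (forall i, `|v i 0| <= K) ->
  enorm v <= d%:R * K.
Proof.
move=> h; apply: (@le_trans _ _ (Num.sqrt (d%:R * K ^+ 2))).
  rewrite /enorm ler_sqrt; last by rewrite mulr_ge0 ?sqr_ge0.
  by apply: sum_le_const => i; rewrite -expr2; apply: sq_le.
case: (posnP d) => [->|dp]; first by rewrite !mul0r sqrtr0.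
have K0 : 0 <= K by apply: le_trans (h (Ordinal dp)).
rewrite -(ger0_norm (x := d%:R * K)) ?mulr_ge0 //.
rewrite -sqrtr_sqr ler_sqrt ?sqr_ge0 // exprMn ler_wpM2r ?sqr_ge0 //.
by rewrite -natrX ler_nat expnS leq_pmulr.
Qed.

Lemma hs_entries (A : 'M[R]_d) K : (forall i j, `|A i j| <= K) ->
  hsnorm A ^+ 2 <= (d * d)%:R * K ^+ 2.
Proof.
move=> h; rewrite hs_sq natrM -mulrA; apply: sum_le_const => i.
by apply: sum_le_const => j; apply: sq_le.
Qed.

Lemma dot_entries (u v : 'cV[R]_d) K : (forall i, `|u i 0| <= K) ->
  dotv u v <= d%:R * K * enorm v.
Proof.
move=> h; apply: le_trans (ler_norm _) _; rewrite /dotv.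
apply: le_trans (ler_norm_sum _ _ _) _.
rewrite -mulrA; apply: sum_le_const => i.
rewrite normrM; apply: ler_pM => //; last exact: coord_le_enorm.
Qed.

Lemma prod_entries (A B : 'M[R]_d) KA KB i j :
  (forall i j, `|A i j| <= KA) -> (forall i j, `|B i j| <= KB) ->
  `|(A *m B) i j| <= d%:R * (KA * KB).
Proof.
move=> hA hB; rewrite mxE; apply: le_trans (ler_norm_sum _ _ _) _.
by apply: sum_le_const => k; rewrite normrM; apply: ler_pM.
Qed.

Lemma unif {I : finType} (P : I -> R -> Prop) :
  (forall i C C', C <= C' -> P i C -> P i C') -> (forall i, exists C, P i C) ->
  exists C, 0 <= C /\ forall i, P i C.
Proof.
move=> mono h; have [f hf] := choice h.
exists (\sum_i `|f i|); split; first by apply: sumr_ge0.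
move=> i; apply: mono (hf i).
by apply: le_trans (ler_norm _) (term_le_sum (fun i => `|f i|) i _).
Qed.

Lemma prod_diff {a b c e La Kb Kc Lb : R} :
  `|a - c| <= La -> `|b| <= Kb -> `|c| <= Kc -> `|b - e| <= Lb ->
  `|a * b - c * e| <= La * Kb + Kc * Lb.
Proof.
move=> h1 h2 h3 h4.
have -> : a * b - c * e = (a - c) * b + c * (b - e) by ring.
apply: le_trans (ler_normD _ _) _; rewrite !normrM.
by apply: lerD; apply: ler_pM.
Qed.
End Aux.
Theorem lemma3p4 (R : realType) (d : nat) (theta T lam : R)
  (b : R -> 'cV[R]_d -> 'cV[R]_d) (sigma : R -> 'cV[R]_d -> 'M[R]_d)
  (psi : R -> 'cV[R]_d -> 'cV[R]_d) (Psiinv : R -> 'cV[R]_d -> 'cV[R]_d) :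
  0 < theta < 1 -> 0 < T -> 0 < lam ->
  LinfCb_vec 0 theta b ->
  LinfCb_mx 1 theta sigma ->
  (forall t x, 0 <= t -> sigma t x *m (sigma t x)^T \in unitmx) ->
  (exists C : R, forall t x, 0 <= t ->
      hsnorm (invmx (sigma t x *m (sigma t x)^T)) <= C) ->
  (* psi in L^oo([0,oo), C_b^{2+theta}) solves
     d_t psi + 1/2 Tr[a Hess psi] + <b, grad psi> - lam psi = b on [0,oo) x R^d,
     in integrated form in time *)
  LinfCb_vec 2 theta psi ->
  (forall (i : 'I_d) x s t, 0 <= s -> s <= t ->
     lebesgue_measure.-integrable `[s, t]
       (EFin \o (fun r => b r x i 0 -
          ell_op (sigma r x *m (sigma r x)^T) (b r x) lam (psi r) i x)) /\
     psi t x i 0 - psi s x i 0 =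
       \int[lebesgue_measure]_(r in `[s, t])
          (b r x i 0 - ell_op (sigma r x *m (sigma r x)^T) (b r x) lam (psi r) i x)) ->
  (forall t x, 0 <= t -> hsnorm (jac (psi t) x) <= 2^-1) ->
  (* Psi_t = id + psi_t is a C^2-diffeomorphism with inverse Psiinv t *)
  (forall t, 0 <= t ->
     (forall x, Psiinv t (x + psi t x) = x) /\
     (forall y, Psiinv t y + psi t (Psiinv t y) = y) /\
     C2_vec (fun x => x + psi t x) /\ C2_vec (Psiinv t)) ->
  (exists C : R, forall t x, 0 <= t ->
     hsnorm (jac (fun y => y + psi t y) x) <= C /\
     (forall i : 'I_d, hsnorm (hess_comp (fun y => y + psi t y) i x) <= C) /\
     hsnorm (jac (Psiinv t) x) <= C) ->
  (forall t x, 0 <= t -> forall i j : 'I_d,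
     (fun n : nat =>
        (\sum_(k < n) (- jac (psi t) (Psiinv t x)) ^+ k) i j) @ \oo
     --> jac (Psiinv t) x i j) ->
  let sighat := fun t x =>
    jac (fun y => y + psi t y) (Psiinv t x) *m sigma t (Psiinv t x) in
  let bhat := fun t x => lam *: psi t (Psiinv t x) in
  exists K1 kappa1 delta1 : R, 0 < K1 /\ 0 < kappa1 /\ 0 < delta1 /\
    forall t, 0 <= t <= T -> forall x y : 'cV[R]_d,
      [/\ hsnorm (sighat t x - sighat t y) ^+ 2
            + 2 * dotv (bhat t x - bhat t y) (x - y) <= K1 * enorm (x - y) ^+ 2,
          (forall z : 'cV[R]_d,
             kappa1 ^+ 2 * enorm z ^+ 2 <=
             dotv ((sighat t x *m (sighat t x)^T) *m z) z) &
          enorm ((sighat t x - sighat t y) *m (x - y)) <= delta1 * enorm (x - y)].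

Proof.
move=> /andP[th0 th1] T0 lam0 hb hsig hunit [Ca hCa] hpsi hpde hjpsi hdiff
  [CH hCH] hser sighat bhat.
have CH0 : 0 <= CH := le_trans (hs_ge0 _) (hCH 0 0 (lexx 0)).1.
have Ca0 : 0 <= Ca := le_trans (hs_ge0 _) (hCa 0 0 (lexx 0)).
have [Cs [Cs0 hCs]] : exists C, 0 <= C /\ forall ij : 'I_d * 'I_d,
    (forall t, 0 <= t -> forall s : seq 'I_d, (size s <= 1)%N -> forall x,
      `|pdern (fun x => sigma t x ij.1 ij.2) s x| <= C).
  apply: unif.
    move=> ij C C' le h t t0 s hs x; exact: le_trans (h t t0 s hs x) le.
  by move=> [i j]; exact: (hsig i j).2.2.1.
pose e xy := enorm (xy.1 - xy.2 : 'cV[R]_d).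
have facts : forall t, 0 <= t ->
  [/\ (forall z i j, `|sigma t z i j| <= Cs),
      (forall a b i j, `|sigma t a i j - sigma t b i j| <= Cs * n1 (a - b)),
      (forall z i k, `|jac (fun y => y + psi t y) z i k| <= CH),
      (forall a b i k, `|jac (fun y => y + psi t y) a i k -
                          jac (fun y => y + psi t y) b i k| <= CH * n1 (a - b)) &
      (forall a b, n1 (Psiinv t a - Psiinv t b) <= d%:R * (CH * n1 (a - b)))].
  move=> t t0; split.
  - by move=> z i j; exact: (hCs (i, j) t t0 [::] isT z).
  - move=> a b0 i j; apply: (lipd (fun z => sigma t z i j)).
      by move=> k; exact: (hsig i j).2.1 t t0 [::] isT k.
    by move=> k z; exact: (hCs (i, j) t t0 [:: k] isT z).
  - by move=> z i k; apply: le_trans (entry_le_hs _ i k) (hCH t z t0).1.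
  - move=> a b0 i k; rewrite !mxE.
    apply: (lipd (pderiv (fun y => (y + psi t y) i 0) k)).
      by move=> l; exact: (((hdiff t t0).2.2.1 i [:: k] isT).2 isT l).
    move=> l z; apply: le_trans ((hCH t z t0).2.1 i).
    by have := entry_le_hs (hess_comp (fun y => y + psi t y) i z) l k; rewrite mxE.
  - move=> a b0; apply: sum_le_const => i; rewrite !mxE.
    apply: (lipd (fun z => Psiinv t z i 0)).
      by move=> l; exact: (((hdiff t t0).2.2.2 i [::] isT).2 isT l).
    move=> l z; apply: le_trans (hCH t z t0).2.2.
    by have := entry_le_hs (jac (Psiinv t) z) i l; rewrite mxE.
pose B2 := 2 * (d%:R * (CH * Cs)).
pose L := d%:R * (2 * CH * Cs * (d%:R * (CH * d%:R))).
pose Kb := lam * (1 + d%:R * (CH * d%:R)).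
pose Q := (d * d)%:R * (d%:R * (Ca * Cs)) ^+ 2 + 1.
pose K1 := (d * d)%:R * L ^+ 2 + 2 * (d%:R * Kb) + 1.
pose delta := d%:R * (d%:R * B2) + 1.
have dge0 : 0 <= d%:R :> R by [].
have B20 : 0 <= B2 by rewrite /B2 !mulr_ge0.
have L0 : 0 <= L by rewrite /L !mulr_ge0 // ltW.
have Kb0 : 0 <= Kb by apply: mulr_ge0; [exact: ltW | rewrite addr_ge0 // !mulr_ge0].
have Q1 : 1 <= Q by rewrite /Q lerDr mulr_ge0 ?sqr_ge0.
have Q0 : 0 < Q by apply: lt_le_trans Q1.
exists K1, (Num.sqrt ((4 * Q)^-1)), delta.
split.
  have : 0 <= (d * d)%:R * L ^+ 2 by rewrite mulr_ge0 ?sqr_ge0.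
  have : 0 <= d%:R * Kb by rewrite mulr_ge0.
  rewrite /K1; lra.
split; first by rewrite sqrtr_gt0 invr_gt0; apply: mulr_gt0 => //; rewrite ltr0n.
split.
  have : 0 <= d%:R * (d%:R * B2) by rewrite !mulr_ge0.
  rewrite /delta; lra.
move=> t /andP[t0 tT] x y.
have [hsb hsL hJb hJL hn1p] := facts t t0.
have e0 := enorm_ge0 (x - y).
have n1e : n1 (x - y) <= d%:R * enorm (x - y) := n1_le _.
have n1p : n1 (Psiinv t x - Psiinv t y) <= d%:R * (CH * (d%:R * enorm (x - y))).
  apply: le_trans (hn1p x y) _; apply: ler_wpM2l => //; exact: ler_wpM2l.
have sb : forall z i j, `|sighat t z i j| <= d%:R * (CH * Cs).
  move=> z i j; exact: prod_entries.
have Db : forall i j, `|(sighat t x - sighat t y) i j| <= B2.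
  move=> i j.
  have -> : (sighat t x - sighat t y) i j = sighat t x i j - sighat t y i j by rewrite !mxE.
  apply: le_trans (ler_normB _ _) _.
  have -> : B2 = d%:R * (CH * Cs) + d%:R * (CH * Cs) by rewrite /B2; ring.
  exact: lerD (sb x i j) (sb y i j).
have DL : forall i j, `|(sighat t x - sighat t y) i j| <= L * enorm (x - y).
  move=> i j; rewrite /sighat !mxE -sumrB; apply: le_trans (ler_norm_sum _ _ _) _.
  have -> : L * enorm (x - y) =
     d%:R * (2 * CH * Cs * (d%:R * (CH * (d%:R * enorm (x - y))))) by rewrite /L; ring.
  apply: sum_le_const => k.
  have := prod_diff (hJL (Psiinv t x) (Psiinv t y) i k) (hsb (Psiinv t x) k j)
    (hJb (Psiinv t y) i k) (hsL (Psiinv t x) (Psiinv t y) k j).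
  move=> /le_trans; apply.
  have -> : CH * n1 (Psiinv t x - Psiinv t y) * Cs + CH * (Cs * n1 (Psiinv t x - Psiinv t y))
     = 2 * CH * Cs * n1 (Psiinv t x - Psiinv t y) by ring.
  by apply: ler_wpM2l => //; rewrite !mulr_ge0.
have Epsi : forall z, psi t (Psiinv t z) = z - Psiinv t z.
  move=> z; apply: (addrI (Psiinv t z)); rewrite ((hdiff t t0).2.1 z).
  by rewrite addrC subrK.
split.
- have h1 : hsnorm (sighat t x - sighat t y) ^+ 2 <= (d * d)%:R * (L * enorm (x - y)) ^+ 2.
    exact: hs_entries.
  have ub : forall i, `|(bhat t x - bhat t y) i 0| <= Kb * enorm (x - y).
    move=> i; rewrite /bhat !Epsi !mxE.
    have -> : lam * (x i 0 - Psiinv t x i 0) - lam * (y i 0 - Psiinv t y i 0) =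
       lam * ((x i 0 - y i 0) - (Psiinv t x i 0 - Psiinv t y i 0)) by ring.
    rewrite normrM (gtr0_norm lam0).
    have hx : `|x i 0 - y i 0| <= enorm (x - y).
      by have := coord_le_enorm (x - y) i; rewrite !mxE.
    have hp : `|Psiinv t x i 0 - Psiinv t y i 0| <= d%:R * (CH * (d%:R * enorm (x - y))).
      apply: le_trans _ n1p.
      have := term_le_sum (fun k => `|(Psiinv t x - Psiinv t y) k 0|) i (fun _ => normr_ge0 _).
      by rewrite !mxE.
    have -> : Kb * enorm (x - y) = lam * (enorm (x - y) + d%:R * (CH * (d%:R * enorm (x - y)))).
      by rewrite /Kb; ring.
    apply: ler_wpM2l; first exact: ltW.
    by apply: le_trans (ler_normB _ _) _; exact: lerD hx hp.
  have h2 := dot_entries _ (x - y) _ ub.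
  have -> : K1 * enorm (x - y) ^+ 2 = (d * d)%:R * (L * enorm (x - y)) ^+ 2 +
       2 * (d%:R * (Kb * enorm (x - y)) * enorm (x - y)) + enorm (x - y) ^+ 2.
    by rewrite /K1; ring.
  have := sqr_ge0 (enorm (x - y)).
  lra.
- move=> z.
  have JA : jac (fun y => y + psi t y) (Psiinv t x) = 1%:M + jac (psi t) (Psiinv t x).
    by apply: jacPs => i j; exact: (hpsi i).2.1 t t0 [::] isT j.
  set J := jac (fun y => y + psi t y) (Psiinv t x) in JA.
  set S := sigma t (Psiinv t x).
  set A := jac (psi t) (Psiinv t x) in JA.
  have sig : sighat t x = J *m S by [].
  rewrite sqr_sqrtr; last by rewrite invr_ge0 mulr_ge0 // ltW.
  rewrite enorm_sq dotv_mx.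
  set u := (sighat t x)^T *m z.
  set w := J^T *m z.
  have uE : u = S^T *m w by rewrite /u /w sig trmx_mul mulmxA.
  set v := A^T *m z.
  have wE : forall i, w i 0 = z i 0 + v i 0.
    by move=> i; rewrite /w JA linearD /= trmx1 mulmxDl mul1mx mxE.
  have hv : dotv v v <= 4^-1 * dotv z z.
    rewrite /v; have := mxCS (A^T) z; move/le_trans; apply.
    rewrite hs_tr; apply: ler_wpM2r; first exact: dotv_ge0.
    have hA : `|hsnorm A| <= 2^-1 by rewrite ger0_norm ?hs_ge0 //; exact: hjpsi.
    have := sq_le hA; move/le_trans; apply.
    rewrite expr2 -invfM (_ : (2 * 2 : R) = 4) //; ring.
  have hz : dotv z z <= 4 * dotv w w.
    have : dotv z z <= 2 * dotv w w + 2 * dotv v v.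
      rewrite /dotv !mulr_sumr -big_split; apply: ler_sum => i _; rewrite wE.
      have key : z i 0 * z i 0 <= 2 * ((z i 0 + v i 0) * (z i 0 + v i 0)) + 2 * (v i 0 * v i 0).
        rewrite -subr_ge0.
        have -> : 2 * ((z i 0 + v i 0) * (z i 0 + v i 0)) + 2 * (v i 0 * v i 0) - z i 0 * z i 0
          = (z i 0 + 2 * v i 0) ^+ 2 by ring.
        exact: sqr_ge0.
      exact: key.
    move: hv; lra.
  have hw : dotv w w <= Q * dotv u u.
    have ua := hunit t (Psiinv t x) t0.
    have wM : w = (invmx (S *m S^T) *m S) *m u.
      by rewrite uE mulmxA -(mulmxA _ S) mulVmx // mul1mx.
    rewrite wM; have := mxCS (invmx (S *m S^T) *m S) u; move/le_trans; apply.
    apply: ler_wpM2r; first exact: dotv_ge0.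
    have hM : forall i j, `|(invmx (S *m S^T) *m S) i j| <= d%:R * (Ca * Cs).
      move=> i j; apply: prod_entries => k l; last exact: hsb.
      exact: le_trans (entry_le_hs _ k l) (hCa t (Psiinv t x) t0).
    have := hs_entries _ _ hM; move/le_trans; apply.
    by rewrite /Q lerDl.
  have fin : dotv z z <= (4 * Q) * dotv u u.
    apply: le_trans hz _; rewrite -mulrA; apply: ler_wpM2l => //.
  apply: le_trans (ler_wpM2l _ fin) _; first by rewrite invr_ge0 mulr_ge0 // ltW.
  by rewrite mulrA mulVf ?mul1r // mulf_neq0 // gt_eqF.
- apply: (@le_trans _ _ (d%:R * (d%:R * (B2 * enorm (x - y))))).
    apply: enorm_entries => i; rewrite mxE; apply: le_trans (ler_norm_sum _ _ _) _.
    apply: sum_le_const => j; rewrite normrM; apply: ler_pM => //.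
    by have := coord_le_enorm (x - y) j.
  have -> : d%:R * (d%:R * (B2 * enorm (x - y))) = (d%:R * (d%:R * B2)) * enorm (x - y) by ring.
  by apply: ler_wpM2r => //; rewrite /delta lerDl.
Qed.
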